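(* For every integer $\nu\ge1$ the following identity of polynomials in $z$ holds: $$\sum_{i=0}^{2\nu-2}(-1)^iz^i\binom{2\nu-2}{i}\sum_{r=0}^{\nu}\frac{(-1)^r(-\frac32)^{\overline r}\Gamma(2\nu+\frac12-r)}{r!\,(\nu-r)!\,\Gamma(r-\frac12)\Gamma(\nu-r+\frac12)}\cdot\frac{(\frac32-r)^{\overline i}}{(\frac52-r)^{\overline i}}=\sum_{i=0}^{\nu-2}(-1)^iz^i\binom{2\nu-2}{i}\frac{(\nu-i-1)^{\overline\nu}(\frac32)^{\overline i}}{(-\frac12-i)^{\overline\nu}\,\Gamma(-\frac12)\,(\frac52)^{\overline i}}.$$
   Context: $(x)^{\overline i}=x(x+1)\cdots(x+i-1)$, $(x)^{\overline0}=1$, is the rising factorial; $\Gamma$ is the Gamma function (so $\Gamma(-\frac12)=-2\sqrt\pi$). *)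

(* Defs.v *)
From HB Require Import structures.
From mathcomp Require Import all_boot all_order all_algebra.
From mathcomp Require Import all_classical all_reals all_analysis.
Set Implicit Arguments. Unset Strict Implicit. Unset Printing Implicit Defensive.
Import Order.TTheory GRing.Theory Num.Theory.
Import numFieldNormedType.Exports.
Local Open Scope ring_scope.

Definition rising {R : pzRingType} (x : R) (i : nat) : R :=
  \prod_(k < i) (x + k%:R).

(* Euler's Gamma function on the reals, via the Gauss limit formula
   Gamma x = lim_{n -> oo} n! n^x / (x (x+1) ... (x+n)),
   valid for every real x that is not a nonpositive integer
   (in particular at all half-integers, which is all we need). *)
Definition Gamma {R : realType} (x : R) : R :=
  limn (fun n : nat => n`!%:R * (n%:R `^ x) / rising x n.+1).

(* Main.v *)
Require Import Defs.
From HB Require Import structures.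
From mathcomp Require Import all_boot all_order all_algebra.
From mathcomp Require Import all_classical all_reals all_analysis.
From mathcomp Require Import ring lra zify.
Import Order.TTheory GRing.Theory Num.Theory.
Import numFieldNormedType.Exports.
Local Open Scope classical_set_scope.
Local Open Scope ring_scope.
Set Implicit Arguments. Unset Strict Implicit. Unset Printing Implicit Defensive.

Lemma risingS (R : pzRingType) (x : R) n : rising x n.+1 = rising x n * (x + n%:R).
Proof. by rewrite /rising big_ord_recr. Qed.

Lemma risingSl (R : comPzRingType) (x : R) n : rising x n.+1 = x * rising (x + 1) n.
Proof.
rewrite /rising big_ord_recl addr0; congr (_ * _); apply: eq_bigr => i _.
by rewrite /bump /= -addrA -natr1 (addrC 1).
Qed.

Definition gauss (R : realType) (x : R) (n : nat) : R :=
  n`!%:R * (n%:R `^ x) / rising x n.+1.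

Lemma GammaE (R : realType) (x : R) : Gamma x = limn (gauss x).
Proof. by []. Qed.

Lemma gaussS (R : realType) (x : R) n : x != 0 -> (0 < n)%N ->
  gauss (x + 1) n = gauss x n * (x * n%:R / (x + n.+1%:R)).
Proof.
move=> x0 n0.
have e : rising (x + 1) n.+1 = x^-1 * (rising x n.+1 * (x + n.+1%:R)).
  by rewrite -risingS [rising x _]risingSl mulrA mulVf // mul1r.
rewrite /gauss e powRD; last by rewrite pnatr_eq0 -lt0n n0 implybT.
rewrite powRr1 ?ler0n // !invfM invrK; ring.
Qed.

Lemma inv_cvg0 (R : realType) (c : R) : (n%:R + c)^-1 @[n --> \oo] --> 0.
Proof.
rewrite -cvgrVy; last first.
  near=> n; rewrite invr_gt0.
  have : 1 - c <= n%:R by near: n; exact: nbhs_infty_ger.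
  lra.
apply/cvgryPge => A; near=> n; rewrite /= invrK.
have : A - c <= n%:R by near: n; exact: nbhs_infty_ger.
lra.
Unshelve. all: by end_near.
Qed.

Lemma fac_cvg (R : realType) (x : R) :
  (x * n%:R / (x + n.+1%:R)) @[n --> \oo] --> x.
Proof.
have h : (x - x * (x + 1) * (n%:R + (x + 1))^-1) @[n --> \oo] --> x - x * (x + 1) * 0.
  apply: cvgB; first exact: cvg_cst.
  apply: cvgMl_tmp; exact: inv_cvg0.
rewrite mulr0 subr0 in h; apply: cvg_trans h; apply: near_eq_cvg.
near=> n.
have hn : 0 < n%:R + (x + 1).
  have : 1 - (x + 1) <= n%:R by near: n; exact: nbhs_infty_ger.
  lra.
rewrite -natr1 /=; field.
rewrite addrA (addrC x) -addrA; exact: lt0r_neq0.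
Unshelve. all: by end_near.
Qed.

Lemma step_fwd (R : realType) (x L : R) : x != 0 ->
  gauss x @ \oo --> L -> gauss (x + 1) @ \oo --> L * x.
Proof.
move=> x0 h; apply: (cvg_trans _ (cvgM h (@fac_cvg R x))); apply: near_eq_cvg.
near=> n; rewrite /= gaussS //; near: n; exact: nbhs_infty_gt.
Unshelve. all: by end_near.
Qed.

Lemma step_bwd (R : realType) (x L : R) : x != 0 ->
  gauss (x + 1) @ \oo --> L -> gauss x @ \oo --> L * x^-1.
Proof.
move=> x0 h.
have hv : (fun n : nat => (x * n%:R / (x + n.+1%:R))^-1) @ \oo --> x^-1.
  exact: (cvgV x0 (@fac_cvg R x)).
apply: (cvg_trans _ (cvgM h hv)).
apply: near_eq_cvg; near=> n.
have n0 : (0 < n)%N by near: n; exact: nbhs_infty_gt.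
have hn : 1 - x <= n%:R by near: n; exact: nbhs_infty_ger.
rewrite /= gaussS // mulfK //.
rewrite mulf_neq0 ?invr_eq0 ?mulf_neq0 ?pnatr_eq0 -?lt0n //.
rewrite -natr1; apply: lt0r_neq0; lra.
Unshelve. all: by end_near.
Qed.

Lemma gammaS (R : realType) (x : R) : x != 0 -> cvgn (gauss x) ->
  cvgn (gauss (x + 1)) /\ Gamma (x + 1) = x * Gamma x.
Proof.
move=> x0 /cvg_ex [L hL]; have h := step_fwd x0 hL.
split; first exact: (cvgP _ h).
by rewrite !GammaE (cvg_lim _ h) // (cvg_lim _ hL) // mulrC.
Qed.

Lemma gammaS' (R : realType) (x : R) : x != 0 -> cvgn (gauss (x + 1)) -> cvgn (gauss x).
Proof.
by move=> x0 /cvg_ex [L hL]; exact: (cvgP _ (step_bwd x0 hL)).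
Qed.

Lemma rising_half_gt0 (R : realType) n : 0 < rising (1 / 2 : R) n.
Proof.
rewrite /rising; apply: prodr_gt0 => i _; apply: ltr_pwDl => //.
Qed.

Definition aseq (R : realType) (n : nat) : R := (n`!%:R / rising (1 / 2 : R) n.+1) ^+ 2.

Lemma aseq_ge0 (R : realType) n : 0 <= aseq R n.
Proof. exact: sqr_ge0. Qed.

Lemma aseqS (R : realType) n :
  aseq R n.+1 = aseq R n * ((n%:R + 1) / (n%:R + 3 / 2)) ^+ 2.
Proof.
rewrite /aseq -exprMn risingS factS natrM -natr1.
have h1 := rising_half_gt0 R n.+1.
have h2 : 0 < n%:R + 3 / 2 :> R by apply: ltr_pwDr => //; exact: ler0n.
set P := rising _ n.+1 in h1 *.
congr (_ ^+ 2); rewrite -natr1; field.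
rewrite (lt0r_neq0 h1) andbT; apply/negP => /eqP h; lra.
Qed.

Lemma gauss_half_ge0 (R : realType) n : 0 <= gauss (1 / 2 : R) n.
Proof.
rewrite /gauss; apply: divr_ge0; last exact: ltW (rising_half_gt0 _ _).
by apply: mulr_ge0 => //; exact: powR_ge0.
Qed.

Lemma gauss_half_sqr (R : realType) n : gauss (1 / 2 : R) n ^+ 2 = aseq R n * n%:R.
Proof.
rewrite /gauss /aseq div1r powR12_sqrt ?ler0n //.
rewrite !expr_div_n exprMn sqr_sqrtr ?ler0n //; ring.
Qed.

Lemma gauss_half_nd (R : realType) : nondecreasing_seq (gauss (1 / 2 : R)).
Proof.
apply/nondecreasing_seqP => n.
have h0 := gauss_half_ge0 R n; have h1 := gauss_half_ge0 R n.+1.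
suff : gauss (1 / 2 : R) n ^+ 2 <= gauss (1 / 2 : R) n.+1 ^+ 2 by nra.
rewrite !gauss_half_sqr aseqS -mulrA; apply: ler_wpM2l; first exact: aseq_ge0.
have t0 : 0 <= n%:R :> R by exact: ler0n.
set t : R := n%:R in t0 *.
have h2 : 0 < (t + 3 / 2) ^+ 2 by apply: exprn_gt0; lra.
rewrite -natr1 -/t expr_div_n mulrAC ler_pdivlMr //; nra.
Qed.

Lemma aseq_bound (R : realType) n : aseq R n * (n%:R + 1) <= 4.
Proof.
elim: n => [|n IH].
  by rewrite /aseq /rising big_ord1 fact0 addr0 mul1r; lra.
apply: le_trans IH; rewrite aseqS -mulrA; apply: ler_wpM2l; first exact: aseq_ge0.
have t0 : 0 <= n%:R :> R by exact: ler0n.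
set t : R := n%:R in t0 *.
have h2 : 0 < (t + 3 / 2) ^+ 2 by apply: exprn_gt0; lra.
rewrite -natr1 -/t expr_div_n mulrAC ler_pdivrMr //; nra.
Qed.

Lemma gauss_half_le2 (R : realType) n : gauss (1 / 2 : R) n <= 2.
Proof.
have h0 := gauss_half_ge0 R n.
suff : gauss (1 / 2 : R) n ^+ 2 <= 4 by nra.
rewrite gauss_half_sqr; apply: le_trans (aseq_bound R n).
apply: ler_wpM2l; first exact: aseq_ge0; lra.
Qed.

Lemma gauss_half_cvg (R : realType) : cvgn (gauss (1 / 2 : R)).
Proof.
apply: nondecreasing_is_cvgn; first exact: gauss_half_nd.
by exists 2 => _ [n _ <-]; exact: gauss_half_le2.
Qed.

Lemma Gamma_half_gt0 (R : realType) : 0 < Gamma (1 / 2 : R).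
Proof.
apply: (@lt_le_trans _ _ (gauss (1 / 2 : R) 1)); last first.
  exact: (nondecreasing_cvgn_le (@gauss_half_nd R) (@gauss_half_cvg R) 1).
rewrite /gauss; apply: divr_gt0; last exact: rising_half_gt0.
by apply: mulr_gt0 => //; apply: powR_gt0.
Qed.

Definition hx (R : realType) (k : int) : R := k%:~R + 1 / 2.

Lemma hx_neq0 (R : realType) k : hx R k != 0.
Proof.
rewrite /hx; apply/negP => /eqP h.
have : ((2 * k + 1)%:~R : R) = 0.
  rewrite intrD intrM /=; lra.
move/eqP; rewrite intr_eq0; lia.
Qed.

Lemma hxD (R : realType) k (n : nat) : hx R k + n%:R = hx R (k + n%:Z).
Proof. by rewrite /hx intrD /=; ring. Qed.

Lemma hx1 (R : realType) k : hx R k + 1 = hx R (k + 1).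
Proof. by rewrite /hx intrD /=; ring. Qed.

Lemma hx_cvg (R : realType) k : cvgn (gauss (hx R k)).
Proof.
elim/int_rect: k => [|n IH|n IH].
- by rewrite /hx add0r; exact: gauss_half_cvg.
- have := (gammaS (hx_neq0 R n) IH).1; by rewrite hx1 -addn1 PoszD.
- apply: (gammaS' (hx_neq0 R _)); rewrite hx1.
  by have -> : (- (n.+1 : int) + 1 = - (n : int))%R by rewrite -addn1 PoszD; ring.
Qed.

Lemma Gamma_hxS (R : realType) k : Gamma (hx R (k + 1)) = hx R k * Gamma (hx R k).
Proof. by rewrite -hx1; exact: (gammaS (@hx_neq0 R k) (@hx_cvg R k)).2. Qed.

Lemma Gamma_hx_neq0 (R : realType) k : Gamma (hx R k) != 0.
Proof.
elim/int_rect: k => [|n IH|n IH].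
- by rewrite /hx add0r; apply: lt0r_neq0; exact: Gamma_half_gt0.
- by rewrite -addn1 PoszD Gamma_hxS mulf_neq0 // hx_neq0.
- move: IH; have -> : (- (n : int) = - (n.+1 : int) + 1)%R by rewrite -addn1 PoszD; ring.
  by rewrite Gamma_hxS mulf_eq0 negb_or => /andP [].
Qed.

Lemma Gamma_hx_add (R : realType) k n :
  Gamma (hx R k + n%:R) = rising (hx R k) n * Gamma (hx R k).
Proof.
elim: n => [|n IH]; first by rewrite addr0 /rising big_ord0 mul1r.
rewrite risingS -natr1 addrA hxD hx1 Gamma_hxS -hxD IH; ring.
Qed.

Lemma rising_hx_neq0 (R : realType) k n : rising (hx R k) n != 0.
Proof. by rewrite /rising; apply/prodf_neq0 => i _; rewrite hxD hx_neq0. Qed.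

Lemma size_prodXsubC_ne (R : fieldType) n (r : 'I_n.+1) (xs : nat -> R) :
  (size (\prod_(s < n.+1 | s != r) ('X - (xs s)%:P))%R <= n.+1)%N.
Proof.
rewrite size_prod; last by move=> i _; rewrite polyXsubC_eq0.
rewrite (eq_bigr (fun _ => 2%N)); last by move=> i _; rewrite size_XsubC.
rewrite sum_nat_const.
have -> : #|[pred s : 'I_n.+1 | s != r]| = n.
  by have := cardC1 r; rewrite card_ord /=.
lia.
Qed.

Lemma pf (R : fieldType) (n : nat) (xs a : nat -> R) (Q : {poly R}) :
  (forall r s : 'I_n.+1, xs r = xs s -> r = s) ->
  (size Q <= n.+1)%N ->
  (forall r : 'I_n.+1, Q.[xs r] = a r * \prod_(s < n.+1 | s != r) (xs r - xs s)) ->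
  forall t, (forall s : 'I_n.+1, t != xs s) ->
  \sum_(r < n.+1) a r / (t - xs r) = Q.[t] / \prod_(s < n.+1) (t - xs s).
Proof.
move=> xinj sQ HQ t ht.
pose P := \sum_(r < n.+1) a r *: \prod_(s < n.+1 | s != r) ('X - (xs s)%:P).
have ev : forall y, P.[y] = \sum_(r < n.+1) a r * \prod_(s < n.+1 | s != r) (y - xs s).
  move=> y; rewrite /P horner_sum; apply: eq_bigr => r _.
  by rewrite hornerZ horner_prod; congr (_ * _); apply: eq_bigr => s _; rewrite hornerXsubC.
have evr : forall r : 'I_n.+1, P.[xs r] = a r * \prod_(s < n.+1 | s != r) (xs r - xs s).
  move=> r; rewrite ev [\sum_(_ < _) _](bigD1 r) //=.
  rewrite [X in _ + X]big1 ?addr0 // => r' hr'.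
  rewrite (bigD1 r) /=; last by rewrite eq_sym.
  by rewrite subrr mul0r mulr0.
have PQ : P = Q.
  apply/eqP; rewrite -subr_eq0; apply/negPn/negP => hne.
  have := @max_poly_roots _ (P - Q) [seq xs (val s) | s <- enum 'I_n.+1] hne.
  rewrite size_map size_enum_ord.
  have -> : all (root (P - Q)) [seq xs (val s) | s <- enum 'I_n.+1].
    by apply/allP => y /mapP [s _ ->]; rewrite rootE hornerD hornerN evr HQ subrr.
  have -> : uniq [seq xs (val s) | s <- enum 'I_n.+1].
    rewrite map_inj_uniq ?enum_uniq // => s s' /xinj; exact.
  move=> /(_ isT isT); apply/negP; rewrite -leqNgt.
  apply: leq_trans (size_polyD _ _) _; rewrite size_polyN geq_max sQ andbT.
  apply: leq_trans (size_sum _ _ _) _; apply/bigmax_leqP => r _.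
  apply: leq_trans (size_scale_leq _ _) _; exact: size_prodXsubC_ne.
rewrite -PQ ev mulr_suml; apply: eq_bigr => r _.
rewrite [\prod_(_ < _) _](bigD1 r) //= invfM.
have hp : \prod_(s < n.+1 | s != r) (t - xs s) != 0.
  by apply/prodf_neq0 => s _; rewrite subr_eq0.
have hr : t - xs r != 0 by rewrite subr_eq0.
by field; rewrite hp hr.
Qed.

Lemma prodN_ord (R : comPzRingType) m (F : nat -> R) :
  \prod_(k < m) (- F k) = (-1) ^+ m * \prod_(k < m) F k.
Proof.
elim: m => [|m IH]; first by rewrite !big_ord0 mulr1.
by rewrite !big_ord_recr /= IH exprS; ring.
Qed.

Lemma fact_prodR (R : comPzRingType) n : \prod_(s < n) ((n%:R - s%:R) : R) = n`!%:R.
Proof.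
elim: n => [|n IH]; first by rewrite big_ord0.
rewrite big_ord_recl subr0 factS natrM; congr (_ * _).
rewrite -IH; apply: eq_bigr => s _; rewrite /= /bump /= -!natr1; ring.
Qed.

Lemma prod_ne (R : comPzRingType) n r : (r <= n)%N ->
  \prod_(s < n.+1 | val s != r) ((r%:R - s%:R) : R)
  = r`!%:R * ((-1) ^+ (n - r) * (n - r)`!%:R).
Proof.
move=> rn; have [m ->] : exists m, n = (r + m)%N by exists (n - r)%N; rewrite subnKC.
rewrite addKn; elim: m => [|m IH].
  rewrite addn0 big_mkcond big_ord_recr /= eqxx mulr1 -fact_prodR.
  rewrite expr0 fact0 !mulr1; apply: eq_bigr => s _.
  by rewrite /= (ltn_eqF (ltn_ord s)).
rewrite addnS big_mkcond big_ord_recr /= -big_mkcond /= IH.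
have -> : ((r + m).+1 != r)%N by rewrite -addnS -{2}(addn0 r) eqn_add2l.
rewrite exprS factS natrM -natr1 natrD; ring.
Qed.

Definition Aterm (R : realType) (nu r : nat) : R :=
  (-1) ^+ r * rising (- (3 / 2) : R) r * Gamma ((2 * nu)%:R + 1 / 2 - r%:R)
  / (r`!%:R * (nu - r)`!%:R * Gamma (r%:R - 1 / 2) * Gamma (nu%:R - r%:R + 1 / 2)).

Definition Qpoly (R : realType) (nu : nat) : {poly R} :=
  ((3 / 2) / Gamma (- (1 / 2) : R)) *: \prod_(k < nu) ('X - (nu%:R - 1 + k%:R)%:P).

Lemma hxm1 (R : realType) : hx R (-1) = - (1 / 2).
Proof. by rewrite /hx rmorphN1; lra. Qed.

Lemma residue (R : realType) (nu : nat) (r : 'I_nu.+1) :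
  (Qpoly R nu).[r%:R - 3 / 2]
  = (Aterm R nu r * (3 / 2 - r%:R))
    * \prod_(s < nu.+1 | s != r) ((r%:R - 3 / 2) - (s%:R - 3 / 2)).
Proof.
have rn : (r <= nu)%N by rewrite -ltnS.
set h := hx R (nu%:Z - r%:Z).
have hE : h = nu%:R - r%:R + 1 / 2 by rewrite /h /hx rmorphB.
have e1 : (2 * nu)%:R + 1 / 2 - r%:R = h + nu%:R :> R by rewrite hE natrM; ring.
have e2 : r%:R - 1 / 2 = hx R (-1) + r%:R :> R by rewrite hxm1; ring.
rewrite /Aterm /Qpoly e1 e2 -hE Gamma_hx_add Gamma_hx_add -hxm1.
rewrite hornerZ horner_prod.
have ek : forall k : nat, r%:R - 3 / 2 - (nu%:R - 1 + k%:R) = - (h + k%:R) :> R.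
  by move=> k; rewrite hE; lra.
under eq_bigr => k _ do rewrite hornerXsubC ek.
rewrite (prodN_ord nu (fun k => h + k%:R)) -/(rising h nu).
under eq_bigl => s do rewrite -(inj_eq val_inj).
have es : forall s : nat, r%:R - 3 / 2 - (s%:R - 3 / 2) = r%:R - s%:R :> R.
  by move=> s; lra.
under eq_bigr => s _ do rewrite es.
rewrite prod_ne //=.
have tau : rising (- (3 / 2) : R) r * (3 / 2 - r%:R) = (3 / 2) * rising (hx R (-1)) r.
  have := risingS (- (3 / 2) : R) r; rewrite risingSl hxm1.
  rewrite (_ : - (3 / 2) + 1 = - (1 / 2) :> R); last by lra.
  move=> e; rewrite (_ : 3 / 2 - r%:R = - (- (3 / 2) + r%:R) :> R); last by lra.
  by rewrite mulrN -e; ring.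
have sg : (-1) ^+ nu = (-1) ^+ r * (-1) ^+ (nu - r) :> R by rewrite -exprD subnKC.
have g1 := @Gamma_hx_neq0 R (nu%:Z - r%:Z); rewrite -/h in g1.
have g2 := @Gamma_hx_neq0 R (-1).
have s1 := @rising_hx_neq0 R (-1) r.
have f1 : (r`!%:R : R) != 0 by rewrite pnatr_eq0 -lt0n fact_gt0.
have f2 : ((nu - r)`!%:R : R) != 0 by rewrite pnatr_eq0 -lt0n fact_gt0.
rewrite sg.
move: tau; set T := rising (- (3 / 2)) r; move=> tau.
have u0 : 3 / 2 - r%:R != 0 :> R.
  have := @hx_neq0 R (1 - r%:Z); rewrite /hx rmorphB /=.
  by rewrite (_ : 1 - r%:R + 1 / 2 = 3 / 2 - r%:R :> R) //; lra.
have tau' : T = 3 / 2 * rising (hx R (-1)) r / (3 / 2 - r%:R).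
  by rewrite -tau mulfK.
rewrite tau' -/h.
set sr := rising (hx R (-1)) r in s1 *; set G1 := Gamma h in g1 *.
set G2 := Gamma (hx R (-1)) in g2 *.
field.
rewrite g1 g2 s1 f1 f2 /=; apply/negP => /eqP e; move/eqP: u0; apply; lra.
Qed.

Lemma ratio (R : fieldType) (x : R) i : rising (x + 1) i != 0 -> x + i%:R != 0 ->
  rising x i / rising (x + 1) i = x / (x + i%:R).
Proof.
move=> h1 h2; apply/eqP; rewrite eqr_div //; apply/eqP.
by rewrite -risingS risingSl.
Qed.

Lemma hx_eq (R : realType) (k : int) (y : R) : y = k%:~R + 1 / 2 -> y != 0.
Proof. by move=> ->; exact: hx_neq0. Qed.

Lemma sizeQ (R : realType) nu : (size (Qpoly R nu) <= nu.+1)%N.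
Proof.
apply: leq_trans (size_scale_leq _ _) _.
rewrite size_prod; last by move=> k _; rewrite polyXsubC_eq0.
rewrite (eq_bigr (fun _ => 2%N)); last by move=> k _; rewrite size_XsubC.
rewrite sum_nat_const (_ : #|_| = nu); [lia | exact: card_ord].
Qed.

Lemma final_alg (R : realType) (G s rr r3 P t u : R) : s * s = 1 -> G != 0 -> s != 0 ->
  r3 != 0 -> P != 0 -> u = 3 / 2 + t -> 3 / 2 + t != 0 ->
  3 / 2 / G * (s * rr) / (u * P) = rr * r3 / (s * P * G * (r3 * (3 / 2 + t) / (3 / 2))).
Proof.
move=> hs g0 s0 r0 p0 -> t1.
have e : s = s^-1 by rewrite -[s^-1]mul1r -hs mulfK.
rewrite {1}e; field.
rewrite r0 g0 p0 s0 !andbT; apply/negP => /eqP h; move/eqP: t1; apply.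
have e2 : 3 / 2 + t = (3 + t * 2) / 2 by field.
by rewrite e2 h mul0r.
Qed.

Lemma coef_id (R : realType) (nu i : nat) : (1 <= nu)%N -> (i <= 2 * nu - 2)%N ->
  \sum_(r < nu.+1) (Aterm R nu r * (rising (3 / 2 - r%:R) i / rising (5 / 2 - r%:R) i))
  = if (i < nu.-1)%N then
      rising ((nu - i - 1)%:R : R) nu * rising (3 / 2 : R) i
        / (rising (- (1 / 2) - i%:R) nu * Gamma (- (1 / 2) : R) * rising (5 / 2 : R) i)
    else 0.
Proof.
move=> hnu hi.
pose xs (s : nat) : R := s%:R - 3 / 2.
pose a (r : nat) : R := Aterm R nu r * (3 / 2 - r%:R).
have -> : \sum_(r < nu.+1) (Aterm R nu r * (rising (3 / 2 - r%:R) i / rising (5 / 2 - r%:R) i))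
    = \sum_(r < nu.+1) a r / (i%:R - xs r).
  apply: eq_bigr => r _.
  rewrite (_ : 5 / 2 - r%:R = (3 / 2 - r%:R) + 1 :> R); last by lra.
  rewrite ratio; last first.
  - apply: (@hx_eq R (1 - r%:Z + i%:Z)); rewrite ?(rmorphD, rmorphN, rmorphB) /=; lra.
  - rewrite (_ : 3 / 2 - r%:R + 1 = hx R (2 - r%:Z)); first exact: rising_hx_neq0.
    rewrite /hx rmorphB /=; lra.
  rewrite /a /xs mulrA; congr (_ / _); lra.
have xinj : forall r s : 'I_nu.+1, xs r = xs s -> r = s.
  move=> r s e; apply: val_inj; apply/eqP; rewrite -(eqr_nat R); apply/eqP.
  rewrite /xs in e; lra.
have xt : forall s : 'I_nu.+1, i%:R != xs s.
  move=> s; apply/negP => /eqP e; move/eqP: (@hx_neq0 R (i%:Z - s%:Z + 1)); apply.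
  rewrite /hx ?(rmorphD, rmorphN, rmorphB) /=; rewrite /xs in e; lra.
rewrite (@pf R nu xs a (Qpoly R nu) xinj (sizeQ R nu) (@residue R nu) _ xt).
rewrite /Qpoly hornerZ horner_prod.
under eq_bigr => k _ do rewrite hornerXsubC.
case: ifP => hlt.
- have c : ((nu - i - 1)%:R : R) = nu%:R - i%:R - 1.
    have h : (nu = (nu - i - 1) + i + 1)%N by lia.
    rewrite [in RHS]h !natrD; ring.
  have ek : forall k : nat, i%:R - (nu%:R - 1 + k%:R) = - ((nu - i - 1)%:R + k%:R) :> R.
    by move=> k; rewrite c; lra.
  under eq_bigr => k _ do rewrite ek.
  rewrite (prodN_ord nu (fun k => (nu - i - 1)%:R + k%:R)) -/(rising _ nu).
  rewrite big_ord_recl /=.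
  have ed : rising (- (1 / 2) - i%:R) nu
      = (-1) ^+ nu * \prod_(k < nu) (i%:R - xs (bump 0 k)).
    rewrite /rising -(prodN_ord nu (fun k : nat => i%:R - xs (bump 0 k))).
    apply: eq_bigr => k _; rewrite /xs /bump /=.
    rewrite natrD; lra.
  rewrite ed.
  have e5 : rising (5 / 2 : R) i = rising (3 / 2) i * (3 / 2 + i%:R) / (3 / 2).
    rewrite -risingS risingSl (_ : 3 / 2 + 1 = 5 / 2 :> R); last by lra.
    by field.
  rewrite e5.
  have r3 : rising (3 / 2 : R) i != 0.
    rewrite (_ : 3 / 2 = hx R 1); first exact: rising_hx_neq0.
    by rewrite /hx; lra.
  have g : Gamma (- (1 / 2) : R) != 0 by rewrite -hxm1; exact: Gamma_hx_neq0.
  have p0 : \prod_(k < nu) (i%:R - xs (bump 0 k)) != 0.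
    by apply/prodf_neq0 => k _; rewrite subr_eq0; exact: (xt (lift ord0 k)).
  have x0 : i%:R - xs 0 != 0 by rewrite subr_eq0; exact: (xt ord0).
  have sg : (-1) ^+ nu != 0 :> R by rewrite expf_neq0 // oppr_eq0 oner_eq0.
  have i0 : 3 / 2 + i%:R != 0 :> R.
    apply/negP => /eqP e; have h0 : (0 : R) <= i%:R by exact: ler0n.
    lra.
  apply: final_alg => //; last by rewrite /xs /=; lra.
  by rewrite -exprD addnn -signr_odd odd_double.

- have hk : (i + 1 - nu < nu)%N by move: hlt => /negbT; rewrite -leqNgt; lia.
  rewrite (bigD1 (Ordinal hk)) //=.
  rewrite (_ : i%:R - (nu%:R - 1 + (i + 1 - nu)%:R) = 0 :> R).
    by rewrite mul0r mulr0 mul0r.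
  have e : (i + 1 = (i + 1 - nu) + nu)%N by move: hlt => /negbT; rewrite -leqNgt; lia.
  have : ((i + 1)%:R : R) = ((i + 1 - nu) + nu)%N%:R by rewrite -e.
  rewrite !natrD; lra.
Qed.

Unset Implicit Arguments.

Theorem mainTheorem14 (R : realType) (nu : nat) (hnu : (1 <= nu)%N) :
  \sum_(i < (2 * nu - 2).+1)
     (((-1) ^+ i * 'C(2 * nu - 2, i)%:R *
       \sum_(r < nu.+1)
          ((-1) ^+ r * rising (- (3 / 2) : R) r
             * Gamma ((2 * nu)%:R + 1 / 2 - r%:R)
           / (r`!%:R * (nu - r)`!%:R * Gamma (r%:R - 1 / 2)
                * Gamma (nu%:R - r%:R + 1 / 2))
           * (rising (3 / 2 - r%:R) i / rising (5 / 2 - r%:R) i)))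
      *: 'X^i : {poly R})
  =
  \sum_(i < nu.-1)
     (((-1) ^+ i * 'C(2 * nu - 2, i)%:R *
       (rising ((nu - i - 1)%:R : R) nu * rising (3 / 2 : R) i
        / (rising (- (1 / 2) - i%:R) nu * Gamma (- (1 / 2) : R)
           * rising (5 / 2 : R) i)))
      *: 'X^i : {poly R}).
Proof.
pose F (i : nat) : {poly R} := ((-1) ^+ i * 'C(2 * nu - 2, i)%:R *
       (rising ((nu - i - 1)%:R : R) nu * rising (3 / 2 : R) i
        / (rising (- (1 / 2) - i%:R) nu * Gamma (- (1 / 2) : R)
           * rising (5 / 2 : R) i))) *: 'X^i.
have hle : (nu.-1 <= (2 * nu - 2).+1)%N by lia.
rewrite (big_ord_widen _ F hle) [RHS]big_mkcond /=.
apply: eq_bigr => i _.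
have hi : (i <= 2 * nu - 2)%N by rewrite -ltnS.
have := coef_id R hnu hi; rewrite /Aterm => ->.
rewrite /F; case: ifP => _ //.
by rewrite mulr0 scale0r.
Qed.
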